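(* Let $q$ be a prime power and $n=q^4-1$. There is no symmetric cyclotomic coset of cardinality $2$; that is, there is no $x\in\{0,\ldots,n-1\}$ with $\#I_x=2$ and $I_{n-qx}=I_x$.
   Context: Identify $\mathbb{Z}_n$ with $\{0,\ldots,n-1\}$, all arithmetic modulo $n$. The cyclotomic coset of $x$ with respect to $q^2$ is $I_x=\{x,\,q^2x\bmod n\}$. The (Hermitian) reciprocal coset of $I_x$ is $I_{n-qx}$; $I_x$ is symmetric if $I_{n-qx}=I_x$. *)

(* Defs.v *)
From mathcomp Require Import all_boot.

Definition prime_power (q : nat) : Prop :=
  exists p k : nat, prime p /\ 0 < k /\ q = p ^ k.

(* The q^2-cyclotomic coset of x modulo n, as a duplicate-free list:
   I_x = {x, q^2 x mod n} (elements taken in Z_n = {0,...,n-1}). *)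
Definition cyc_coset (n q x : nat) : seq nat :=
  undup [:: x %% n; (q ^ 2 * x) %% n].

Definition recip_index (n q x : nat) : nat := (n - (q * x) %% n) %% n.

(* Main.v *)
Require Import Defs.
From mathcomp Require Import all_boot.

Theorem mainTheorem9 (q : nat) (hq : prime_power q) :
  ~ (exists x : nat,
        x < q ^ 4 - 1 /\
        size (cyc_coset (q ^ 4 - 1) q x) = 2 /\
        cyc_coset (q ^ 4 - 1) q (recip_index (q ^ 4 - 1) q x)
          =i cyc_coset (q ^ 4 - 1) q x).
Proof.
move=> [x [xn [hs hsym]]].
set n := q ^ 4 - 1 in xn hs hsym.
have n0 : 0 < n by apply: leq_ltn_trans xn.
have q4 : q ^ 4 = n + 1.
  by rewrite /n subnK //; move: n0; rewrite /n subn_gt0; apply: ltnW.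
set y := recip_index n q x in hsym.
have ylt : y < n by rewrite /y /recip_index ltn_mod.
have hy : n %| y + q * x.
  rewrite /y /recip_index /dvdn modnDml -modnDmr subnK ?modnn //.
  by apply: ltnW; rewrite ltn_mod.
have yin : y \in cyc_coset n q x.
  by rewrite -hsym /cyc_coset mem_undup inE (modn_small ylt) eqxx.
have hne : x %% n != (q ^ 2 * x) %% n.
  apply/negP => /eqP E; move: hs; rewrite /cyc_coset /= E inE eqxx /=; by [].
have hA : n %| x + q * x -> False.
  move=> hA; move/negP: hne; apply; rewrite eq_sym.
  rewrite -(eqn_modDr (q * x)).
  have h1 : n %| q ^ 2 * x + q * x.
    have -> : q ^ 2 * x + q * x = q * (x + q * x).
      by rewrite mulnDr mulnA -(mulnn q) addnC.
    exact: dvdn_mull.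
  by move: h1 hA; rewrite /dvdn => /eqP -> /eqP ->.
move: yin; rewrite /cyc_coset mem_undup !inE => /orP [] /eqP ey.
  apply: hA; move: hy; rewrite ey /dvdn; by rewrite modnDml.
apply: hA.
have hB : n %| q ^ 2 * x + q * x by move: hy; rewrite ey /dvdn modnDml.
have : n %| q ^ 3 * (q ^ 2 * x + q * x) by exact: dvdn_mull.
have -> : q ^ 3 * (q ^ 2 * x + q * x) = n * (x + q * x) + (x + q * x).
  have -> : q ^ 3 * (q ^ 2 * x + q * x) = q ^ 4 * (x + q * x).
    by rewrite mulnDr !mulnA -!expnSr mulnDr mulnA -expnSr addnC.
  by rewrite q4 mulnDl mul1n.
by rewrite dvdn_addr // dvdn_mulr.
Qed.
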